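(* Let $H$ be a complex separable Hilbert space and let $S\in B(H)$ have Cartesian decomposition $S=A+iC$ ($A,C$ self-adjoint) with $A$ and $C$ positive. Then $$\|S^*S-SS^*\|\le \frac12\left(\|A\|^2+\|C\|^2\right).$$
   Context: $B(H)$ denotes the algebra of bounded linear operators on $H$ with the operator norm. The Cartesian decomposition of $S\in B(H)$ is $S=A+iC$ with $A=\frac{S+S^*}{2}$ and $C=\frac{S-S^*}{2i}$ self-adjoint. *)

(* Defs.v *)
From HB Require Import structures.
From mathcomp Require Import all_boot all_order all_algebra.
From mathcomp Require Import all_classical all_reals.
From mathcomp Require Import complex.
Set Implicit Arguments. Unset Strict Implicit. Unset Printing Implicit Defensive.
Import Order.TTheory GRing.Theory Num.Theory.
Local Open Scope ring_scope.
Local Open Scope classical_set_scope.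

Section Hilbert.
Variables (R : realType) (V : lmodType R[i]) (ip : V -> V -> R[i]).

Definition is_inner_product : Prop :=
  [/\ (forall (a : R[i]) (x y z : V), ip (a *: x + y) z = a * ip x z + ip y z),
      (forall x y : V, ip y x = (ip x y)^*),
      (forall x : V, 0 <= ip x x) &
      (forall x : V, ip x x = 0 -> x = 0)].

Definition hnorm (x : V) : R := Num.sqrt (complex.Re (ip x x)).

Definition hcomplete : Prop :=
  forall u : nat -> V,
    (forall eps : R, 0 < eps -> exists N : nat,
        forall m n : nat, (N <= m)%N -> (N <= n)%N -> hnorm (u m - u n) < eps) ->
    exists l : V, forall eps : R, 0 < eps -> exists N : nat,
        forall n : nat, (N <= n)%N -> hnorm (u n - l) < eps.

Definition hseparable : Prop :=
  exists d : nat -> V, forall (x : V) (eps : R), 0 < eps ->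
    exists n : nat, hnorm (x - d n) < eps.

Definition is_separable_hilbert : Prop :=
  [/\ is_inner_product, hcomplete & hseparable].

Definition bounded_linear (T : V -> V) : Prop :=
  (forall (a : R[i]) (x y : V), T (a *: x + y) = a *: T x + T y) /\
  exists M : R, forall x : V, hnorm (T x) <= M * hnorm x.

Definition is_adjoint (T Ts : V -> V) : Prop :=
  forall x y : V, ip (T x) y = ip x (Ts y).

Definition positive_op (T : V -> V) : Prop := forall x : V, 0 <= ip (T x) x.

Definition opnorm (T : V -> V) : R :=
  sup [set hnorm (T x) | x in [set x : V | hnorm x <= 1]].

End Hilbert.

(* Main.v *)
Require Import Defs.
From HB Require Import structures.
From mathcomp Require Import all_boot all_order all_algebra.
From mathcomp Require Import all_classical all_reals.
From mathcomp Require Import complex.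
From mathcomp Require Import ring lra.
Import Order.TTheory GRing.Theory Num.Theory.
Local Open Scope ring_scope.

Lemma quad_lemma (R : realType) (p q r : R) : 0 <= r ->
  (forall t : R, 0 <= p - 2 * t * q + t ^+ 2 * r) -> q ^+ 2 <= p * r.
Proof.
move=> r0 H.
have [rpos|] := ltP 0 r.
  have := H (q / r).
  have -> : p - 2 * (q / r) * q + (q / r) ^+ 2 * r = (p * r - q ^+ 2) / r.
    by field; rewrite gt_eqF.
  by move=> h; have := mulr_ge0 h (ltW rpos); rewrite divfK ?gt_eqF // subr_ge0.
move=> r0'; have r00 : r = 0 by apply/le_anti; rewrite r0 r0'.
subst r; rewrite mulr0.
have [q0|qn0] := eqVneq q 0; first by rewrite q0 expr0n.
have := H ((p + 1) / (2 * q)).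
have -> : p - 2 * ((p + 1) / (2 * q)) * q + ((p + 1) / (2 * q)) ^+ 2 * 0 = -1.
  by field; rewrite qn0.
by rewrite oppr_ge0 ler10.
Qed.
Section IP.
Variables (R : realType) (V : lmodType R[i]) (ip : V -> V -> R[i]).
Hypothesis ipL : forall (a : R[i]) (x y z : V), ip (a *: x + y) z = a * ip x z + ip y z.
Hypothesis ipH : forall x y : V, ip y x = Num.conj (ip x y).
Hypothesis ipP : forall x : V, 0 <= ip x x.
Hypothesis ipD : forall x : V, ip x x = 0 -> x = 0.

Local Notation N := (hnorm ip).
Definition rp x y := complex.Re (ip x y).

Lemma cjD (u v : R[i]) : Num.conj (u + v) = Num.conj u + Num.conj v.
Proof. case: u => a b; case: v => c d; apply/eqP; rewrite eq_complex /=; apply/andP; split; apply/eqP; ring. Qed.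
Lemma cjM (u v : R[i]) : Num.conj (u * v) = Num.conj u * Num.conj v.
Proof. case: u => a b; case: v => c d; apply/eqP; rewrite eq_complex /=; apply/andP; split; apply/eqP; ring. Qed.
Lemma cjN (u : R[i]) : Num.conj (- u) = - Num.conj u.
Proof. by case: u => a b. Qed.
Lemma cj0 : Num.conj (0 : R[i]) = 0.
Proof. apply/eqP; rewrite eq_complex /=; apply/andP; split; apply/eqP; ring. Qed.

Lemma ip0l z : ip 0 z = 0.
Proof.
have := ipL 1 0 0 z; rewrite scaler0 addr0 mul1r => h.
by apply: (@addrI _ (ip 0 z)); rewrite addr0 -h.
Qed.
Lemma ipDl x y z : ip (x + y) z = ip x z + ip y z.
Proof. by have := ipL 1 x y z; rewrite scale1r mul1r. Qed.
Lemma ipZl a x z : ip (a *: x) z = a * ip x z.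
Proof. by have := ipL a x 0 z; rewrite addr0 ip0l addr0. Qed.
Lemma ipNl x z : ip (- x) z = - ip x z.
Proof. by rewrite -scaleN1r ipZl mulN1r. Qed.
Lemma ipBl x y z : ip (x - y) z = ip x z - ip y z.
Proof. by rewrite ipDl ipNl. Qed.
Lemma ipDr x y z : ip z (x + y) = ip z x + ip z y.
Proof. by rewrite ipH ipDl cjD -!ipH. Qed.
Lemma ipZr a x z : ip z (a *: x) = Num.conj a * ip z x.
Proof. by rewrite ipH ipZl cjM -!ipH. Qed.
Lemma ipNr x z : ip z (- x) = - ip z x.
Proof. by rewrite ipH ipNl cjN -!ipH. Qed.
Lemma ipBr x y z : ip z (x - y) = ip z x - ip z y.
Proof. by rewrite ipDr ipNr. Qed.
Lemma ip0r z : ip z 0 = 0.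
Proof. by rewrite ipH ip0l cj0. Qed.

Lemma ReM (u v : R[i]) : complex.Re (u * v) = complex.Re u * complex.Re v - complex.Im u * complex.Im v.
Proof. by case: u => a b; case: v => c d. Qed.
Lemma ImM (u v : R[i]) : complex.Im (u * v) = complex.Re u * complex.Im v + complex.Im u * complex.Re v.
Proof. by case: u => a b; case: v => c d. Qed.
Lemma ReD (u v : R[i]) : complex.Re (u + v) = complex.Re u + complex.Re v.
Proof. by case: u => a b; case: v => c d. Qed.
Lemma ReN (u : R[i]) : complex.Re (- u) = - complex.Re u.
Proof. by case: u => a b. Qed.
Lemma ReJ (u : R[i]) : complex.Re (Num.conj u) = complex.Re u.
Proof. by case: u => a b. Qed.
Lemma ImJ (u : R[i]) : complex.Im (Num.conj u) = - complex.Im u.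
Proof. by case: u => a b. Qed.

Lemma rpC x y : rp x y = rp y x.
Proof. by rewrite /rp ipH ReJ. Qed.
Lemma rpDl x y z : rp (x + y) z = rp x z + rp y z.
Proof. by rewrite /rp ipDl ReD. Qed.
Lemma rpNl x z : rp (- x) z = - rp x z.
Proof. by rewrite /rp ipNl ReN. Qed.
Lemma rpBl x y z : rp (x - y) z = rp x z - rp y z.
Proof. by rewrite rpDl rpNl. Qed.
Lemma rpZl (t : R) x z : rp (t%:C%C *: x) z = t * rp x z.
Proof. by rewrite /rp ipZl ReM /= mul0r subr0. Qed.
Lemma rpDr x y z : rp z (x + y) = rp z x + rp z y.
Proof. by rewrite rpC rpDl !(rpC z). Qed.
Lemma rpNr x z : rp z (- x) = - rp z x.
Proof. by rewrite rpC rpNl rpC. Qed.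
Lemma rpBr x y z : rp z (x - y) = rp z x - rp z y.
Proof. by rewrite rpDr rpNr. Qed.
Lemma rpZr (t : R) x z : rp z (t%:C%C *: x) = t * rp z x.
Proof. by rewrite rpC rpZl rpC. Qed.

Lemma ipxx x : ip x x = (rp x x)%:C%C.
Proof. by have := ipP x; rewrite /rp; case: (ip x x) => a b; rewrite lecE /= => /andP[/eqP -> _]. Qed.
Lemma rpxx_ge0 x : 0 <= rp x x.
Proof. by have := ipP x; rewrite ipxx lecR. Qed.
Lemma N_ge0 x : 0 <= N x.
Proof. exact: sqrtr_ge0. Qed.
Lemma Nsq x : N x ^+ 2 = rp x x.
Proof. by rewrite /hnorm sqr_sqrtr // rpxx_ge0. Qed.
Lemma N_eq0 x : N x = 0 -> x = 0.
Proof.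
move=> h; apply: ipD; rewrite ipxx.
have : rp x x = 0 by rewrite -Nsq h expr0n.
by move=> ->.
Qed.
Lemma N0 : N 0 = 0.
Proof. by rewrite /hnorm ip0l /= sqrtr0. Qed.

Lemma sq_le (a b : R) : 0 <= b -> a ^+ 2 <= b ^+ 2 -> a <= b.
Proof. move=> b0 h; nra. Qed.
Lemma sq_eq (a b : R) : 0 <= a -> 0 <= b -> a ^+ 2 = b ^+ 2 -> a = b.
Proof. move=> a0 b0 h; apply/le_anti/andP; split; nra. Qed.

Lemma CS x y : rp x y <= N x * N y.
Proof.
apply: sq_le; first by rewrite mulr_ge0 // N_ge0.
rewrite exprMn !Nsq; apply: quad_lemma; first exact: rpxx_ge0.
move=> t; have := rpxx_ge0 (x - t%:C%C *: y).
rewrite !(rpBl, rpBr, rpZl, rpZr) (rpC y x).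
by move=> h; lra.
Qed.

Lemma N_tri x y : N (x + y) <= N x + N y.
Proof.
apply: sq_le; first by rewrite addr_ge0 // N_ge0.
rewrite Nsq !(rpDl, rpDr) (rpC y x).
have := CS x y; have := Nsq x; have := Nsq y; have := N_ge0 x; have := N_ge0 y.
move=> *; nra.
Qed.

Definition kc (c : R[i]) := Num.sqrt (complex.Re c ^+ 2 + complex.Im c ^+ 2).

Lemma N_scale c x : N (c *: x) = kc c * N x.
Proof.
apply: sq_eq; first exact: N_ge0.
  by rewrite mulr_ge0 // ?N_ge0 // sqrtr_ge0.
rewrite exprMn !Nsq /kc sqr_sqrtr; last by apply: addr_ge0; apply: sqr_ge0.
rewrite /rp ipZl ipZr ipxx.
rewrite !(ReM, ImM) ReJ ImJ /=; ring.
Qed.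

Lemma kcR (t : R) : kc t%:C%C = `|t|.
Proof. by rewrite /kc /= expr0n addr0 sqrtr_sqr. Qed.

Lemma ip_ext u w : (forall z, ip u z = ip w z) -> u = w.
Proof.
move=> h; apply/eqP; rewrite -subr_eq0; apply/eqP/ipD.
by rewrite ipDl ipNl h -ipNl -ipDl subrr ip0l.
Qed.


Definition lin (T : V -> V) := forall (a : R[i]) (x y : V), T (a *: x + y) = a *: T x + T y.

Lemma lin0 T : lin T -> T 0 = 0.
Proof.
move=> h; have := h 1 0 0; rewrite scaler0 addr0 scale1r => e.
by apply: (@addrI _ (T 0)); rewrite addr0 -e.
Qed.
Lemma linD T : lin T -> forall x y, T (x + y) = T x + T y.
Proof. by move=> h x y; have := h 1 x y; rewrite !scale1r. Qed.
Lemma linZ T : lin T -> forall a x, T (a *: x) = a *: T x.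
Proof. by move=> h a x; have := h a x 0; rewrite !addr0 lin0 // addr0. Qed.
Lemma linN T : lin T -> forall x, T (- x) = - T x.
Proof. by move=> h x; rewrite -scaleN1r linZ // scaleN1r. Qed.
Lemma linB T : lin T -> forall x y, T (x - y) = T x - T y.
Proof. by move=> h x y; rewrite linD // linN. Qed.

Definition bnd (T : V -> V) := exists M : R, 0 <= M /\ forall x, N (T x) <= M * N x.

Lemma opnorm_ge0 T : lin T -> bnd T -> 0 <= opnorm ip T.
Proof.
move=> hl [M [M0 hM]].
have hub : has_ubound [set N (T x) | x in [set x : V | N x <= 1]].
  exists M => _ [x /= hx <-]; apply: (le_trans (hM x)).
  by rewrite -[leRHS]mulr1 ler_wpM2l.
apply: (ub_le_sup hub); exists 0; first by rewrite /= N0 // ler01.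
by rewrite lin0 // N0.
Qed.

Lemma opnorm_le T : lin T -> bnd T -> forall x, N (T x) <= opnorm ip T * N x.
Proof.
move=> hl [M [M0 hM]] x.
have hub : has_ubound [set N (T x) | x in [set x : V | N x <= 1]].
  exists M => _ [y /= hy <-]; apply: (le_trans (hM y)).
  by rewrite -[leRHS]mulr1 ler_wpM2l.
have [nx0|nxn0] := eqVneq (N x) 0.
  by rewrite (N_eq0 x nx0) lin0 // !N0 mulr0.
have nxp : 0 < N x by rewrite lt_def nxn0 N_ge0.
set y := (N x)^-1%:C%C *: x.
have Ny : N y = 1.
  by rewrite /y N_scale // kcR ger0_norm ?invr_ge0 ?N_ge0 // mulVf.
have : N (T y) <= opnorm ip T.
  by apply: (ub_le_sup hub); exists y => //=; rewrite Ny.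
rewrite /y linZ // N_scale // kcR ger0_norm ?invr_ge0 ?N_ge0 //.
by rewrite mulrC ler_pdivrMr.
Qed.

Lemma opnorm_ub T (b : R) : (forall x, N x <= 1 -> N (T x) <= b) -> opnorm ip T <= b.
Proof.
move=> h; apply: ge_sup; first by exists (N (T 0)), 0 => //=; rewrite N0 // ler01.
by move=> _ [x /= hx <-]; apply: h.
Qed.

Section Key.
Variable T : V -> V.
Hypothesis Tl : lin T.
Hypothesis Tb : bnd T.
Hypothesis Tsa : forall x y, ip (T x) y = ip x (T y).
Hypothesis Tpos : forall x, 0 <= ip (T x) x.

Lemma Tpos' x : 0 <= rp (T x) x.
Proof. by have := Tpos x; rewrite /rp; case: (ip (T x) x) => u v; rewrite lecE /= => /andP[]. Qed.

Lemma key x : N (T x - (opnorm ip T / 2)%:C%C *: x) <= opnorm ip T / 2 * N x.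
Proof.
set a := opnorm ip T.
have a0 : 0 <= a by apply: opnorm_ge0.
have hNl := opnorm_le T Tl Tb.
have rTT : forall u, rp (T (T u)) u = rp (T u) (T u).
  by move=> u; rewrite /rp Tsa.
have step1 : rp (T x) (T x) <= a * rp (T x) x.
  have H : forall t : R, 0 <= rp (T x) x - 2 * t * rp (T x) (T x) + t ^+ 2 * rp (T (T x)) (T x).
    move=> t; have := Tpos' (x - t%:C%C *: T x).
    rewrite linB // linZ // !(rpBl, rpBr, rpZl, rpZr) rTT.
    by move=> h; lra.
  have hq := @quad_lemma R (rp (T x) x) (rp (T x) (T x)) (rp (T (T x)) (T x)) (Tpos' (T x)) H.
  have r1 : rp (T (T x)) (T x) <= a * rp (T x) (T x).
    apply: (le_trans (CS _ _)); rewrite -Nsq expr2 mulrA ler_wpM2r ?N_ge0 //.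
  have q0 : 0 <= rp (T x) (T x) by apply: rpxx_ge0.
  have p0 := Tpos' x.
  set q := rp (T x) (T x) in hq r1 q0 *; set p := rp (T x) x in hq p0 *.
  have h2 : q * q <= q * (a * p).
    have -> : q * (a * p) = p * (a * q) by ring.
    rewrite -expr2; apply: (le_trans hq).
    have : p * rp (T (T x)) (T x) <= p * (a * q) by apply: ler_wpM2l.
    by [].
  have [->|qn] := eqVneq q 0; first by rewrite mulr_ge0.
  have qp : 0 < q by rewrite lt_def qn q0.
  by rewrite -(ler_pM2l qp).
apply: sq_le; first by rewrite mulr_ge0 ?N_ge0 // divr_ge0.
rewrite Nsq exprMn Nsq !(rpBl, rpBr, rpZl, rpZr) (rpC x (T x)).
have := rpxx_ge0 x.
move=> *; nra.
Qed.
End Key.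
Lemma NN y : N (- y) = N y.
Proof. by apply: sq_eq; rewrite ?N_ge0 // !Nsq rpNl rpNr opprK. Qed.

Lemma linNorm (T : V -> V) : lin T -> forall x y, N (x - y) <= N x + N y.
Proof.
move=> _ x y; apply: (le_trans (N_tri _ _)).
by rewrite NN.
Qed.

Lemma main_in (S Sst : V -> V) :
  lin S -> (exists M : R, forall x, N (S x) <= M * N x) ->
  is_adjoint ip S Sst ->
  let A := fun x => 2^-1 *: (S x + Sst x) in
  let C := fun x => (2 * 'i)^-1 *: (S x - Sst x) in
  positive_op ip A ->
  positive_op ip C ->
  opnorm ip (fun x => Sst (S x) - S (Sst x))
    <= 2^-1 * (opnorm ip A ^+ 2 + opnorm ip C ^+ 2).
Proof.
move=> SL [M0 hM0] hadj A C Apos Cpos.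
set M := `|M0|.
have hM : forall x, N (S x) <= M * N x.
  by move=> x; apply: (le_trans (hM0 x)); rewrite ler_wpM2r ?N_ge0 // ler_norm.
have M0' : 0 <= M by rewrite /M normr_ge0.
have adj2 : forall x y, ip (Sst x) y = ip x (S y).
  by move=> x y; rewrite ipH -hadj -ipH.
have SstL : lin Sst.
  move=> a x y; apply: (ip_ext) => z.
  rewrite (ipH z) (ipH z); congr Num.conj.
  by rewrite -hadj ipDr ipZr ipDr ipZr -!hadj.
have Sstb : forall y, N (Sst y) <= M * N y.
  move=> y.
  have h1 : N (Sst y) ^+ 2 <= M * N y * N (Sst y).
    rewrite Nsq /rp -hadj -/(rp (S (Sst y)) y).
    apply: (le_trans (CS _ _)).
    by rewrite [leRHS]mulrAC; apply: ler_wpM2r; [exact: N_ge0 | exact: hM].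
  have [->|hn] := eqVneq (N (Sst y)) 0; first by rewrite mulr_ge0 ?N_ge0.
  have hp : 0 < N (Sst y) by rewrite lt_def hn N_ge0.
  by rewrite -(ler_pM2r hp) -expr2.
have AL : lin A.
  move=> a x y; apply: ip_ext => z; rewrite /A.
  rewrite (linD _ SL) (linZ _ SL) (linD _ SstL) (linZ _ SstL).
  rewrite !(ipDl, ipZl). move: (ip (S x) z) (ip (S y) z) (ip (Sst x) z) (ip (Sst y) z) => p1 p2 p3 p4. ring.
have CL : lin C.
  move=> a x y; apply: ip_ext => z; rewrite /C.
  rewrite (linD _ SL) (linZ _ SL) (linD _ SstL) (linZ _ SstL).
  rewrite !(ipDl, ipZl, ipNl); ring.
have Ab : bnd A.
  exists (kc 2^-1 * (M + M)); split.
    by rewrite mulr_ge0 ?sqrtr_ge0 // addr_ge0.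
  move=> x; rewrite /A N_scale -mulrA ler_wpM2l ?sqrtr_ge0 //.
  apply: (le_trans (N_tri _ _)); rewrite mulrDl lerD //.
have Cb : bnd C.
  exists (kc (2 * 'i)^-1 * (M + M)); split.
    by rewrite mulr_ge0 ?sqrtr_ge0 // addr_ge0.
  move=> x; rewrite /C N_scale -mulrA ler_wpM2l ?sqrtr_ge0 //.
  apply: (le_trans (linNorm _ SL _ _)); rewrite mulrDl lerD //.
have cj2 : Num.conj (2^-1 : R[i]) = 2^-1.
  by rewrite fmorphV rmorphMn rmorph1.
have cj2i : Num.conj ((2 * 'i)^-1 : R[i]) = - (2 * 'i)^-1.
  have cjV : forall u : R[i], Num.conj (u^-1) = (Num.conj u)^-1 by move=> u; exact: conjc_inv.
  have cjn : Num.conj (2 : R[i]) = 2 by exact: conjC_nat.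
  by rewrite cjV cjM conjCi cjn mulrN invrN.
have Asa : forall x y, ip (A x) y = ip x (A y).
  move=> x y; rewrite /A ipZl ipZr ipDl ipDr hadj adj2 cj2; ring.
have Csa : forall x y, ip (C x) y = ip x (C y).
  move=> x y; rewrite /C ipZl ipZr ipBl ipBr hadj adj2 cj2i; ring.
set a := opnorm ip A; set c := opnorm ip C.
have a0 : 0 <= a by apply: opnorm_ge0.
have c0 : 0 <= c by apply: opnorm_ge0.
have kA := key A AL Ab Asa Apos.
have kC := key C CL Cb Csa Cpos.
apply: opnorm_ub => x hx /=.
set al := (a / 2)%:C%C; set be := (c / 2)%:C%C.
have e : Sst (S x) - S (Sst x) =
   (2 * 'i) *: ((A (C x - be *: x) - al *: (C x - be *: x)) - (C (A x - al *: x) - be *: (A x - al *: x))).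
  apply: ip_ext => z.
  rewrite /A /C.
  rewrite !(linD _ SL, linZ _ SL, linB _ SL, linN _ SL, linD _ SstL, linZ _ SstL, linB _ SstL, linN _ SstL).
  rewrite !(ipDl, ipZl, ipNl).
  have i0 : ('i : R[i]) != 0 by rewrite neq0Ci.
  move: i0; move: ('i : R[i]) => i0 hi0.
  by field.
rewrite e N_scale.
have k2 : kc (2 * 'i) = 2.
  have r1 : complex.Re (2 * 'i : R[i]) = 0 by rewrite ReM /=; ring.
  have r2 : complex.Im (2 * 'i : R[i]) = 2 by rewrite ImM /=; ring.
  by rewrite /kc r1 r2 expr0n add0r sqrtr_sqr ger0_norm.
rewrite k2.
set w1 := A (C x - be *: x) - al *: (C x - be *: x).
set w2 := C (A x - al *: x) - be *: (A x - al *: x).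
have f1 : N w1 <= a / 2 * (c / 2 * N x).
  apply: (le_trans (kA _)); apply: ler_wpM2l; first by rewrite divr_ge0.
  exact: kC.
have f2 : N w2 <= c / 2 * (a / 2 * N x).
  apply: (le_trans (kC _)); apply: ler_wpM2l; first by rewrite divr_ge0.
  exact: kA.
have f3 := linNorm _ SL w1 w2.
have nx0 := N_ge0 x.
have ac : a * c * N x <= a * c by rewrite -[leRHS]mulr1 ler_wpM2l ?mulr_ge0.
have sq : 0 <= (a - c) ^+ 2 by apply: sqr_ge0.
nra.
Qed.

End IP.

Theorem mainTheorem3 (R : realType) (V : lmodType R[i]) (ip : V -> V -> R[i])
    (S Sst : V -> V) :
  is_separable_hilbert ip ->
  bounded_linear ip S ->
  is_adjoint ip S Sst ->
  let A := fun x => 2^-1 *: (S x + Sst x) in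
  let C := fun x => (2 * 'i)^-1 *: (S x - Sst x) in
  positive_op ip A ->
  positive_op ip C ->
  opnorm ip (fun x => Sst (S x) - S (Sst x))
    <= 2^-1 * (opnorm ip A ^+ 2 + opnorm ip C ^+ 2).
Proof.
move=> [[ipL ipH ipP ipD] _ _] [SL hb] hadj.
exact: (@main_in R V ip ipL ipH ipP ipD S Sst SL hb hadj).
Qed.
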